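(* Let $X$ be a locally compact locale with frame presentation $\mathcal{O}X=\langle G\mid R\rangle$, let $\mathrm{ev}\colon\Sigma^X\times X\to\Sigma$ be the evaluation map of the exponential $\Sigma^X$, let $\widetilde{\mathrm{ev}}=\mathrm{ev}_{\Sigma^G}\circ(\Sigma^{\Sigma^G}\times i_X)\colon\Sigma^{\Sigma^G}\times X\to\Sigma$, and let $q\colon\Sigma^{\Sigma^G}\to\Sigma^X$ be the unique locale map with $\mathrm{ev}\circ(q\times X)=\widetilde{\mathrm{ev}}$ (equivalently $q=\Sigma^{i_X}$). Then there is a locale map $s\colon\Sigma^X\to\Sigma^{\Sigma^G}$ with $q\circ s=\mathrm{id}_{\Sigma^X}$ and $\widetilde{\mathrm{ev}}\circ(s\times X)=\mathrm{ev}$.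
   Context: A frame is a complete lattice in which finite meets distribute over arbitrary joins; a locale $X$ is formally a frame $\mathcal{O}X$, and a locale map $f\colon X\to Y$ is a frame homomorphism $f^*\colon\mathcal{O}Y\to\mathcal{O}X$. $\Sigma$ is the Sierpiński locale (frame = free frame on one generator). For a set $G$, $\Sigma^G$ is the locale whose frame is the free frame on $G$; it is locally compact, so $\Sigma^{\Sigma^G}$ exists, with evaluation map $\mathrm{ev}_{\Sigma^G}\colon\Sigma^{\Sigma^G}\times\Sigma^G\to\Sigma$. A presentation $\mathcal{O}X=\langle G\mid R\rangle$ means $\mathcal{O}X$ is the quotient of the free frame on $G$ by the congruence generated by the relations $R$; the quotient map is $i_X^*$ for a sublocale inclusion $i_X\colon X\hookrightarrow\Sigma^G$. Since $X$ is locally compact, the exponential $\Sigma^X$ exists. *)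

(* Defs.v *)
From Stdlib Require Import List.

Record frame := Frame {
  carrier :> Type;
  le : carrier -> carrier -> Prop;
  meet : carrier -> carrier -> carrier;
  top : carrier;
  join : forall I : Type, (I -> carrier) -> carrier;
  le_refl : forall a, le a a;
  le_trans : forall a b c, le a b -> le b c -> le a c;
  le_antisym : forall a b, le a b -> le b a -> a = b;
  meet_l : forall a b, le (meet a b) a;
  meet_r : forall a b, le (meet a b) b;
  meet_glb : forall a b c, le c a -> le c b -> le c (meet a b);
  top_max : forall a, le a top;
  join_ub : forall (I : Type) (f : I -> carrier) (i : I), le (f i) (join I f);
  join_least : forall (I : Type) (f : I -> carrier) (a : carrier),
      (forall i, le (f i) a) -> le (join I f) a;
  meet_join_distr : forall (a : carrier) (I : Type) (f : I -> carrier),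
      meet a (join I f) = join I (fun i => meet a (f i))
}.

(** Frame homomorphisms: preserve finite meets and arbitrary joins.
    A locale map f : X -> Y is a frame homomorphism f^* : OY -> OX. *)
Record frame_hom (A B : frame) := FrameHom {
  hom_fun :> A -> B;
  hom_top : hom_fun (top A) = top B;
  hom_meet : forall a b, hom_fun (meet A a b) = meet B (hom_fun a) (hom_fun b);
  hom_join : forall (I : Type) (f : I -> A),
      hom_fun (join A I f) = join B I (fun i => hom_fun (f i))
}.
Arguments hom_fun {A B}.

Definition id_hom (A : frame) : frame_hom A A.
Proof.
  refine (@FrameHom A A (fun x => x) _ _ _); reflexivity.
Defined.

Definition way_below (A : frame) (a b : A) : Prop :=
  forall (I : Type) (f : I -> A), le A b (join A I f) ->
    exists l : list I,
      le A a (join A {i : I | List.In i l} (fun i => f (proj1_sig i))).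

Definition locally_compact (A : frame) : Prop :=
  forall a : A, a = join A {b : A | way_below A b a} (fun b => proj1_sig b).

(** * Free frames: [eta : G -> F] exhibits [F] as the free frame on [G].
    O(Sigma^G) is the free frame on G; O(Sigma) the free frame on one
    generator. *)
Definition is_free_frame (G : Type) (F : frame) (eta : G -> F) : Prop :=
  (forall (L : frame) (g : G -> L),
      exists h : frame_hom F L, forall x, h (eta x) = g x) /\
  (forall (L : frame) (h1 h2 : frame_hom F L),
      (forall x, h1 (eta x) = h2 (eta x)) -> forall y, h1 y = h2 y).

(** * Binary products of locales = coproducts of frames.
    [P] with injections [pA : OA -> P], [pB : OB -> P] (the frame maps of
    the two projections) is the frame of the product locale A x B. *)
Definition is_product (A B P : frame) (pA : frame_hom A P) (pB : frame_hom B P)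
  : Prop :=
  (forall (L : frame) (a : frame_hom A L) (b : frame_hom B L),
      exists h : frame_hom P L,
        (forall x, h (pA x) = a x) /\ (forall y, h (pB y) = b y)) /\
  (forall (L : frame) (h1 h2 : frame_hom P L),
      (forall x, h1 (pA x) = h2 (pA x)) ->
      (forall y, h1 (pB y) = h2 (pB y)) -> forall z, h1 z = h2 z).

(** [k : P -> P'] is the frame map of the product locale map
    [g x h : A' x B' -> A x B], where [f = g^* : OA -> OA'] and
    [g' = h^* : OB -> OB'], and P = O(A x B), P' = O(A' x B'). *)
Definition is_prod_hom {A B A' B' P P' : frame}
  (pA : frame_hom A P) (pB : frame_hom B P)
  (pA' : frame_hom A' P') (pB' : frame_hom B' P')
  (f : frame_hom A A') (g : frame_hom B B') (k : frame_hom P P') : Prop :=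
  (forall x, k (pA x) = pA' (f x)) /\ (forall y, k (pB y) = pB' (g y)).

(** * Exponentials S^X (S the Sierpinski locale).
    [E] is O(S^X), [P] is O(S^X x X) with projections [pE], [pX], and
    [ev : OS -> P] is the frame map of the evaluation ev : S^X x X -> S. *)
Definition is_exponential (S X E P : frame)
  (pE : frame_hom E P) (pX : frame_hom X P) (ev : frame_hom S P) : Prop :=
  is_product E X P pE pX /\
  forall (Z Q : frame) (qZ : frame_hom Z Q) (qX : frame_hom X Q),
    is_product Z X Q qZ qX ->
    forall f : frame_hom S Q,
      (exists g : frame_hom E Z,
          forall k : frame_hom P Q,
            is_prod_hom pE pX qZ qX g (id_hom X) k ->
            forall a, k (ev a) = f a) /\
      (forall g1 g2 : frame_hom E Z,
          (forall k : frame_hom P Q,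
              is_prod_hom pE pX qZ qX g1 (id_hom X) k ->
              forall a, k (ev a) = f a) ->
          (forall k : frame_hom P Q,
              is_prod_hom pE pX qZ qX g2 (id_hom X) k ->
              forall a, k (ev a) = f a) ->
          forall y, g1 y = g2 y).

(* Main.v *)
Require Import Defs.
From Stdlib Require Import Classical FunctionalExtensionality PropExtensionality ProofIrrelevance IndefiniteDescription.

Lemma meet_comm (A : frame) a b : meet A a b = meet A b a.
Proof. apply le_antisym; apply meet_glb; first [apply meet_l | apply meet_r]. Qed.
Lemma meet_idem (A : frame) a : meet A a a = a.
Proof. apply le_antisym. apply meet_l. apply meet_glb; apply le_refl. Qed.
Lemma meet_mono (A : frame) a b c d : le A a c -> le A b d -> le A (meet A a b) (meet A c d).
Proof. intros H1 H2; apply meet_glb; [eapply le_trans; [apply meet_l|exact H1] | eapply le_trans; [apply meet_r|exact H2]]. Qed.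
Lemma meet_of_le (A : frame) a b : le A a b -> meet A a b = a.
Proof. intros; apply le_antisym. apply meet_l. apply meet_glb; auto using le_refl. Qed.
Lemma join_distr_r (A : frame) I f b :
  meet A (join A I f) b = join A I (fun i => meet A (f i) b).
Proof. rewrite meet_comm, meet_join_distr. f_equal. extensionality i. apply meet_comm. Qed.
Lemma meet_join_join_le (A : frame) I J f g c :
  (forall i j, le A (meet A (f i) (g j)) c) -> le A (meet A (join A I f) (join A J g)) c.
Proof.
  intros H. rewrite join_distr_r. apply join_least. intro i.
  rewrite meet_join_distr. apply join_least. auto.
Qed.
Lemma hom_mono {A B : frame} (h : frame_hom A B) a b : le A a b -> le B (h a) (h b).
Proof.
  intros H. rewrite <- (meet_of_le _ _ _ H). rewrite hom_meet. apply meet_r.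
Qed.
Definition bot (A : frame) : A := join A Empty_set (fun e => match e with end).
Lemma bot_le (A : frame) x : le A (bot A) x.
Proof. apply join_least. intros []. Qed.
Lemma hom_bot {A B : frame} (h : frame_hom A B) : h (bot A) = bot B.
Proof. unfold bot. rewrite hom_join. f_equal. extensionality e. destruct e. Qed.

Lemma comp_top {A B C : frame} (f : frame_hom A B) (g : frame_hom B C) :
  g (f (top A)) = top C.
Proof. rewrite !hom_top. reflexivity. Qed.
Lemma comp_meet {A B C : frame} (f : frame_hom A B) (g : frame_hom B C) a b :
  g (f (meet A a b)) = meet C (g (f a)) (g (f b)).
Proof. rewrite !hom_meet. reflexivity. Qed.
Lemma comp_join {A B C : frame} (f : frame_hom A B) (g : frame_hom B C) I h :
  g (f (join A I h)) = join C I (fun i => g (f (h i))).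
Proof. rewrite !hom_join. reflexivity. Qed.
Definition comp_hom {A B C : frame} (f : frame_hom A B) (g : frame_hom B C) : frame_hom A C :=
  @FrameHom A C (fun x => g (f x)) (comp_top f g) (comp_meet f g) (comp_join f g).

(** coproduct of frames via C-ideals *)
Definition cid (A B : frame) (D : A -> B -> Prop) : Prop :=
 (forall a b a' b', D a b -> le A a' a -> le B b' b -> D a' b') /\
 (forall (I:Type) (f : I -> A) b, (forall i, D (f i) b) -> D (join A I f) b) /\
 (forall (I:Type) (f : I -> B) a, (forall i, D a (f i)) -> D a (join B I f)).

Definition CI (A B : frame) := {D : A -> B -> Prop | cid A B D}.

Definition cl (A B : frame) (U : A -> B -> Prop) (a : A) (b : B) : Prop :=
  forall D, cid A B D -> (forall x y, U x y -> D x y) -> D a b.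

Lemma cl_cid (A B : frame) U : cid A B (cl A B U).
Proof.
  split; [|split].
  - intros a b a' b' H Ha Hb D HD HU. pose proof (H D HD HU) as H'.
    destruct HD as [Hd _]. eauto.
  - intros I f b H D HD HU. assert (H' : forall i, D (f i) b) by (intro i; apply (H i D HD HU)).
    destruct HD as [_ [Hj _]]. auto.
  - intros I f a H D HD HU. assert (H' : forall i, D a (f i)) by (intro i; apply (H i D HD HU)).
    destruct HD as [_ [_ Hj]]. auto.
Qed.
Lemma cl_incl (A B : frame) (U : A -> B -> Prop) x y : U x y -> cl A B U x y.
Proof. intros H D _ HU. auto. Qed.

Lemma cid_botA (A B : frame) D : cid A B D -> forall x y, le A x (bot A) -> D x y.
Proof.
  intros [Hd [Hj _]] x y H. apply (Hd (bot A) y); auto using le_refl.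
  apply Hj. intros [].
Qed.
Lemma cid_botB (A B : frame) D : cid A B D -> forall x y, le B y (bot B) -> D x y.
Proof.
  intros [Hd [_ Hj]] x y H. apply (Hd x (bot B)); auto using le_refl.
  apply Hj. intros [].
Qed.

Lemma CI_ext (A B : frame) (D1 D2 : CI A B) :
  (forall a b, proj1_sig D1 a b <-> proj1_sig D2 a b) -> D1 = D2.
Proof.
  destruct D1 as [d1 p1], D2 as [d2 p2]; simpl. intros H.
  assert (d1 = d2) by (extensionality a; extensionality b; apply propositional_extensionality; auto).
  subst. f_equal. apply proof_irrelevance.
Qed.

Definition cle (A B : frame) (D1 D2 : CI A B) : Prop := forall a b, proj1_sig D1 a b -> proj1_sig D2 a b.

Lemma cmeet_cid (A B : frame) (D1 D2 : CI A B) : cid A B (fun a b => proj1_sig D1 a b /\ proj1_sig D2 a b).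
Proof.
  destruct D1 as [d1 [d1a [d1b d1c]]], D2 as [d2 [d2a [d2b d2c]]]; simpl.
  split; [|split].
  - intros a b a' b' [H1 H2] ? ?; split; eauto.
  - intros I f b H; split; [apply d1b | apply d2b]; intro i; apply H.
  - intros I f b H; split; [apply d1c | apply d2c]; intro i; apply H.
Qed.
Definition cmeet (A B : frame) (D1 D2 : CI A B) : CI A B := exist _ _ (cmeet_cid A B D1 D2).

Lemma ctop_cid (A B : frame) : cid A B (fun _ _ => True).
Proof. split; [|split]; auto. Qed.
Definition ctop (A B : frame) : CI A B := exist _ _ (ctop_cid A B).

Definition cjoin (A B : frame) (I : Type) (f : I -> CI A B) : CI A B :=
  exist _ (cl A B (fun a b => exists i, proj1_sig (f i) a b)) (cl_cid _ _ _).

Lemma cle_refl (A B : frame) D : cle A B D D. Proof. unfold cle; auto. Qed.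
Lemma cle_trans (A B : frame) D1 D2 D3 : cle A B D1 D2 -> cle A B D2 D3 -> cle A B D1 D3.
Proof. unfold cle; auto. Qed.
Lemma cle_antisym (A B : frame) D1 D2 : cle A B D1 D2 -> cle A B D2 D1 -> D1 = D2.
Proof. intros; apply CI_ext; split; auto. Qed.
Lemma cmeet_l (A B : frame) D1 D2 : cle A B (cmeet A B D1 D2) D1. Proof. intros a b [? ?]; auto. Qed.
Lemma cmeet_r (A B : frame) D1 D2 : cle A B (cmeet A B D1 D2) D2. Proof. intros a b [? ?]; auto. Qed.
Lemma cmeet_glb (A B : frame) D1 D2 D3 : cle A B D3 D1 -> cle A B D3 D2 -> cle A B D3 (cmeet A B D1 D2).
Proof. intros H1 H2 a b H; split; auto. Qed.
Lemma ctop_max (A B : frame) D : cle A B D (ctop A B). Proof. intros a b _; exact I. Qed.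
Lemma cjoin_ub (A B : frame) I f i : cle A B (f i) (cjoin A B I f).
Proof. intros a b H. apply cl_incl. exists i; auto. Qed.
Lemma cjoin_least (A B : frame) I f D : (forall i, cle A B (f i) D) -> cle A B (cjoin A B I f) D.
Proof.
  intros H a b Hab. apply (Hab (proj1_sig D) (proj2_sig D)).
  intros x y [i Hi]. apply (H i); auto.
Qed.
Lemma cdistr (A B : frame) D I f :
  cmeet A B D (cjoin A B I f) = cjoin A B I (fun i => cmeet A B D (f i)).
Proof.
  apply CI_ext; intros a b; simpl; split.
  - intros [HD Hcl].
    set (U' := fun a0 b0 => exists i, proj1_sig D a0 b0 /\ proj1_sig (f i) a0 b0).
    set (T := fun x y => cl A B U' (meet A x a) (meet B y b)).
    assert (HT : cid A B T).
    { destruct (cl_cid A B U') as [Hd [Hj1 Hj2]]. unfold T. split; [|split].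
      - intros x y x' y' H Hx Hy. eapply Hd; [exact H| |]; apply meet_mono; auto using le_refl.
      - intros I0 g y H. rewrite join_distr_r. apply Hj1. auto.
      - intros I0 g x H. rewrite join_distr_r. apply Hj2. auto. }
    assert (HTa : T a b).
    { apply Hcl; auto. intros x y [i Hi]. apply cl_incl. exists i.
      destruct (proj2_sig D) as [Hd _]. destruct (proj2_sig (f i)) as [Hd' _].
      split.
      - eapply Hd; [exact HD | apply meet_r | apply meet_r].
      - eapply Hd'; [exact Hi | apply meet_l | apply meet_l]. }
    unfold T in HTa. rewrite !meet_idem in HTa. exact HTa.
  - intros H. split.
    + apply (H (proj1_sig D) (proj2_sig D)). intros x y [i [Hx _]]; auto.
    + apply (H _ (cl_cid A B _)). intros x y [i [_ Hx]]. apply cl_incl. exists i; auto.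
Qed.

Definition coprod (A B : frame) : frame :=
  @Frame (CI A B) (cle A B) (cmeet A B) (ctop A B) (cjoin A B)
    (cle_refl A B) (cle_trans A B) (cle_antisym A B) (cmeet_l A B) (cmeet_r A B)
    (cmeet_glb A B) (ctop_max A B) (cjoin_ub A B) (cjoin_least A B) (cdistr A B).

Definition boxp (A B : frame) (a0 : A) (b0 : B) (x : A) (y : B) : Prop :=
  (le A x a0 /\ le B y b0) \/ le A x (bot A) \/ le B y (bot B).

Lemma box_cid (A B : frame) a0 b0 : cid A B (boxp A B a0 b0).
Proof.
  unfold boxp. split; [|split].
  - intros a b a' b' [[H1 H2]|[H|H]] Ha Hb.
    + left; split; eapply le_trans; eauto.
    + right; left; eapply le_trans; eauto.
    + right; right; eapply le_trans; eauto.
  - intros I f b H.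
    destruct (classic (le B b (bot B))) as [Hb|Hb]; [right; right; exact Hb|].
    destruct (classic (exists i, le A (f i) a0 /\ le B b b0)) as [[i [_ Hy]]|Hn].
    + left; split; auto. apply join_least. intro j.
      destruct (H j) as [[? ?]|[?|?]]; auto.
      * eapply le_trans; eauto using bot_le.
      * contradiction.
    + right; left. apply join_least. intro j.
      destruct (H j) as [[? ?]|[?|?]]; auto.
      * exfalso; apply Hn; eauto.
      * contradiction.
  - intros I f a H.
    destruct (classic (le A a (bot A))) as [Ha|Ha]; [right; left; exact Ha|].
    destruct (classic (exists i, le A a a0 /\ le B (f i) b0)) as [[i [Hy _]]|Hn].
    + left; split; auto. apply join_least. intro j.
      destruct (H j) as [[? ?]|[?|?]]; auto.
      * contradiction.
      * eapply le_trans; eauto using bot_le.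
    + right; right. apply join_least. intro j.
      destruct (H j) as [[? ?]|[?|?]]; auto.
      * exfalso; apply Hn; eauto.
      * contradiction.
Qed.

Definition box (A B : frame) a0 b0 : CI A B := exist _ _ (box_cid A B a0 b0).

Lemma pA_top (A B : frame) : box A B (top A) (top B) = ctop A B.
Proof. apply CI_ext; simpl; unfold boxp; split; auto. intros _; left; split; apply top_max. Qed.

Lemma pA_meet (A B : frame) a a' :
  box A B (meet A a a') (top B) = cmeet A B (box A B a (top B)) (box A B a' (top B)).
Proof.
  apply CI_ext; simpl; unfold boxp; intros x y; split.
  - intros [[H1 H2]|[H|H]]; [split; left; split; auto; eapply le_trans; eauto using meet_l, meet_r| auto | auto].
  - intros [[[H1 H2]|[H|H]] [[H3 H4]|[H'|H']]]; auto.
    left; split; auto. apply meet_glb; auto.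
Qed.

Lemma pA_join (A B : frame) I f :
  box A B (join A I f) (top B) = cjoin A B I (fun i => box A B (f i) (top B)).
Proof.
  apply CI_ext; simpl; intros x y; split.
  - intros [[Hx _]|[H|H]].
    + destruct (cl_cid A B (fun a b => exists i, boxp A B (f i) (top B) a b)) as [Hd [Hj1 _]].
      apply (Hd (join A I (fun i => meet A x (f i))) y); auto using le_refl.
      * apply Hj1. intro i. apply cl_incl. exists i. left; split; [apply meet_r | apply top_max].
      * rewrite <- meet_join_distr. apply meet_glb; auto using le_refl.
    + apply cid_botA; auto using cl_cid.
    + apply cid_botB; auto using cl_cid.
  - intros H. apply (H _ (box_cid A B (join A I f) (top B))).
    intros a b [i [[H1 H2]|[H'|H']]]; unfold boxp; auto.
    left; split; auto. eapply le_trans; [exact H1| apply join_ub].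
Qed.

Definition cpA (A B : frame) : frame_hom A (coprod A B) :=
  @FrameHom A (coprod A B) (fun a => box A B a (top B)) (pA_top A B) (pA_meet A B) (pA_join A B).

Lemma pB_meet (A B : frame) a a' :
  box A B (top A) (meet B a a') = cmeet A B (box A B (top A) a) (box A B (top A) a').
Proof.
  apply CI_ext; simpl; unfold boxp; intros x y; split.
  - intros [[H1 H2]|[H|H]]; [split; left; split; auto; eapply le_trans; eauto using meet_l, meet_r| auto | auto].
  - intros [[[H1 H2]|[H|H]] [[H3 H4]|[H'|H']]]; auto.
    left; split; auto. apply meet_glb; auto.
Qed.

Lemma pB_join (A B : frame) I f :
  box A B (top A) (join B I f) = cjoin A B I (fun i => box A B (top A) (f i)).
Proof.
  apply CI_ext; simpl; intros x y; split.
  - intros [[_ Hy]|[H|H]].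
    + destruct (cl_cid A B (fun a b => exists i, boxp A B (top A) (f i) a b)) as [Hd [_ Hj2]].
      apply (Hd x (join B I (fun i => meet B y (f i)))); auto using le_refl.
      * apply Hj2. intro i. apply cl_incl. exists i. left; split; [apply top_max | apply meet_r].
      * rewrite <- meet_join_distr. apply meet_glb; auto using le_refl.
    + apply cid_botA; auto using cl_cid.
    + apply cid_botB; auto using cl_cid.
  - intros H. apply (H _ (box_cid A B (top A) (join B I f))).
    intros a b [i [[H1 H2]|[H'|H']]]; unfold boxp; auto.
    left; split; auto. eapply le_trans; [exact H2| apply join_ub].
Qed.

Definition cpB (A B : frame) : frame_hom B (coprod A B) :=
  @FrameHom B (coprod A B) (fun b => box A B (top A) b) (pA_top A B) (pB_meet A B) (pB_join A B).

Definition hfun (A B L : frame) (al : frame_hom A L) (be : frame_hom B L) (D : CI A B) : L :=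
  join L {p : A * B | proj1_sig D (fst p) (snd p)}
    (fun p => meet L (al (fst (proj1_sig p))) (be (snd (proj1_sig p)))).

Lemma hfun_mono (A B L : frame) al be (D1 D2 : CI A B) :
  (forall a b, proj1_sig D1 a b -> proj1_sig D2 a b) -> le L (hfun A B L al be D1) (hfun A B L al be D2).
Proof.
  intros H. unfold hfun. apply join_least. intros [p Hp].
  eapply le_trans; [| apply (join_ub _ _ _ (exist _ p (H _ _ Hp)))]. apply le_refl.
Qed.

Lemma hfun_top (A B L : frame) al be : hfun A B L al be (ctop A B) = top L.
Proof.
  apply le_antisym; [apply top_max|].
  unfold hfun. eapply le_trans; [| apply (join_ub _ _ _ (exist _ (top A, top B) I))].
  simpl. rewrite !hom_top. apply meet_glb; apply le_refl.
Qed.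

Lemma hfun_meet (A B L : frame) al be D1 D2 :
  hfun A B L al be (cmeet A B D1 D2) = meet L (hfun A B L al be D1) (hfun A B L al be D2).
Proof.
  apply le_antisym.
  - apply meet_glb; apply hfun_mono; intros a b [? ?]; auto.
  - unfold hfun at 2 3. apply meet_join_join_le. intros [[x1 y1] H1] [[x2 y2] H2]. simpl.
    assert (Hm : proj1_sig D1 (meet A x1 x2) (meet B y1 y2) /\ proj1_sig D2 (meet A x1 x2) (meet B y1 y2)).
    { simpl in H1, H2. destruct (proj2_sig D1) as [Hd1 _], (proj2_sig D2) as [Hd2 _]. split.
      - eapply Hd1; [exact H1| apply meet_l | apply meet_l].
      - eapply Hd2; [exact H2| apply meet_r | apply meet_r]. }
    unfold hfun. eapply le_trans; [| apply (join_ub _ _ _ (exist (fun p : A * B => proj1_sig D1 (fst p) (snd p) /\ proj1_sig D2 (fst p) (snd p)) (meet A x1 x2, meet B y1 y2) Hm))]. simpl.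
    rewrite !hom_meet. apply meet_glb; apply meet_glb.
    + eapply le_trans; [apply meet_l| apply meet_l].
    + eapply le_trans; [apply meet_r| apply meet_l].
    + eapply le_trans; [apply meet_l| apply meet_r].
    + eapply le_trans; [apply meet_r| apply meet_r].
Qed.

Lemma hfun_join (A B L : frame) al be I f :
  hfun A B L al be (cjoin A B I f) = join L I (fun i => hfun A B L al be (f i)).
Proof.
  apply le_antisym.
  - set (R := join L I (fun i => hfun A B L al be (f i))).
    set (T := fun x y => le L (meet L (al x) (be y)) R).
    assert (HT : cid A B T).
    { unfold T; split; [|split].
      - intros a b a' b' H Ha Hb. eapply le_trans; [| exact H].
        apply meet_mono; apply hom_mono; auto.
      - intros I0 g b H. rewrite hom_join, join_distr_r. apply join_least. auto.
      - intros I0 g a H. rewrite hom_join, meet_join_distr. apply join_least. auto. }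
    unfold hfun at 1. apply join_least. intros [p Hp]. simpl in Hp.
    apply (Hp T HT). intros x y [i Hi]. unfold T.
    eapply le_trans; [| apply (join_ub _ _ _ i)]. unfold hfun.
    eapply le_trans; [| apply (join_ub _ _ _ (exist _ (x, y) Hi))]. apply le_refl.
  - apply join_least. intro i. apply hfun_mono. intros a b H. apply cl_incl. exists i; auto.
Qed.

Definition hhom (A B L : frame) al be : frame_hom (coprod A B) L :=
  @FrameHom (coprod A B) L (hfun A B L al be) (hfun_top A B L al be) (hfun_meet A B L al be)
    (hfun_join A B L al be).

Lemma hfun_pA (A B L : frame) (al : frame_hom A L) be a : hfun A B L al be (box A B a (top B)) = al a.
Proof.
  apply le_antisym.
  - unfold hfun; apply join_least. intros [[x y] Hp]; simpl in *.
    destruct Hp as [[Hx _]|[H|H]].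
    + eapply le_trans; [apply meet_l| apply hom_mono; auto].
    + eapply le_trans; [apply meet_l|]. eapply le_trans; [apply (hom_mono al _ _ H)|].
      rewrite hom_bot. apply bot_le.
    + eapply le_trans; [apply meet_r|]. eapply le_trans; [apply (hom_mono be _ _ H)|].
      rewrite hom_bot. apply bot_le.
  - assert (Hm : boxp A B a (top B) a (top B)) by (left; split; [apply le_refl| apply top_max]).
    unfold hfun. eapply le_trans; [| apply (join_ub _ _ _ (exist _ (a, top B) Hm))]. simpl.
    rewrite hom_top. apply meet_glb; [apply le_refl| apply top_max].
Qed.

Lemma hfun_pB (A B L : frame) al (be : frame_hom B L) b : hfun A B L al be (box A B (top A) b) = be b.
Proof.
  apply le_antisym.
  - unfold hfun; apply join_least. intros [[x y] Hp]; simpl in *.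
    destruct Hp as [[_ Hy]|[H|H]].
    + eapply le_trans; [apply meet_r| apply hom_mono; auto].
    + eapply le_trans; [apply meet_l|]. eapply le_trans; [apply (hom_mono al _ _ H)|].
      rewrite hom_bot. apply bot_le.
    + eapply le_trans; [apply meet_r|]. eapply le_trans; [apply (hom_mono be _ _ H)|].
      rewrite hom_bot. apply bot_le.
  - assert (Hm : boxp A B (top A) b (top A) b) by (left; split; [apply top_max| apply le_refl]).
    unfold hfun. eapply le_trans; [| apply (join_ub _ _ _ (exist _ (top A, b) Hm))]. simpl.
    rewrite hom_top. apply meet_glb; [apply top_max| apply le_refl].
Qed.

Lemma gen (A B : frame) (D : coprod A B) :
  D = join (coprod A B) {p : A * B | proj1_sig D (fst p) (snd p)}
        (fun p => meet (coprod A B) (cpA A B (fst (proj1_sig p))) (cpB A B (snd (proj1_sig p)))).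
Proof.
  apply CI_ext; simpl; intros a b; split.
  - intros H. apply cl_incl. exists (exist _ (a, b) H). simpl. unfold boxp.
    split; left; split; auto using le_refl, top_max.
  - intros H. apply (H _ (proj2_sig D)). intros x y [[[p1 p2] Hp] [H1 H2]]; simpl in *.
    unfold boxp in *.
    destruct H1 as [[H1 _]|[H1|H1]]; [| apply cid_botA; auto; apply (proj2_sig D) | apply cid_botB; auto; apply (proj2_sig D)].
    destruct H2 as [[_ H2]|[H2|H2]]; [| apply cid_botA; auto; apply (proj2_sig D) | apply cid_botB; auto; apply (proj2_sig D)].
    destruct (proj2_sig D) as [Hd _]. eapply Hd; eauto.
Qed.

Lemma coprod_is_product (A B : frame) : is_product A B (coprod A B) (cpA A B) (cpB A B).
Proof.
  split.
  - intros L al be. exists (hhom A B L al be). split.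
    + intro x. apply hfun_pA.
    + intro y. apply hfun_pB.
  - intros L h1 h2 H1 H2 z. rewrite (gen A B z). rewrite !hom_join. f_equal.
    extensionality p. rewrite !hom_meet, H1, H2. reflexivity.
Qed.

Theorem proposition3p2
  (* the Sierpinski locale: O(Sigma) is the free frame on one generator *)
  (S : frame) (sig : unit -> S) (HS : is_free_frame unit S sig)
  (* the locally compact locale X *)
  (X : frame) (HXlc : locally_compact X)
  (* the presentation OX = <G | R>: O(Sigma^G) = free frame F on G, and the
     quotient map i_X^* : F -> OX of the sublocale inclusion i_X *)
  (G : Type) (F : frame) (eta : G -> F) (HF : is_free_frame G F eta)
  (iX : frame_hom F X) (HiX : forall x : X, exists y : F, iX y = x)
  (* the exponential Sigma^X with evaluation ev : Sigma^X x X -> Sigma *)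
  (E1 P1 : frame) (p1E : frame_hom E1 P1) (p1X : frame_hom X P1)
  (ev : frame_hom S P1) (Hev : is_exponential S X E1 P1 p1E p1X ev)
  (* the exponential Sigma^(Sigma^G) with evaluation ev_{Sigma^G} *)
  (E2 P2 : frame) (p2E : frame_hom E2 P2) (p2F : frame_hom F P2)
  (evG : frame_hom S P2) (HevG : is_exponential S F E2 P2 p2E p2F evG)
  (* the product Sigma^(Sigma^G) x X *)
  (P3 : frame) (p3E : frame_hom E2 P3) (p3X : frame_hom X P3)
  (HP3 : is_product E2 X P3 p3E p3X)
  (* the frame map of Sigma^(Sigma^G) x i_X : Sigma^(Sigma^G) x X -> Sigma^(Sigma^G) x Sigma^G *)
  (k : frame_hom P2 P3)
  (Hk : is_prod_hom p2E p2F p3E p3X (id_hom E2) iX k)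
  (* q : Sigma^(Sigma^G) -> Sigma^X with ev o (q x X) = ev~ := ev_{Sigma^G} o (Sigma^(Sigma^G) x i_X) *)
  (q : frame_hom E1 E2)
  (Hq : forall kq : frame_hom P1 P3,
      is_prod_hom p1E p1X p3E p3X q (id_hom X) kq ->
      forall a : S, kq (ev a) = k (evG a)) :
  exists s : frame_hom E2 E1,
    (* q o s = id_{Sigma^X} *)
    (forall a : E1, s (q a) = a) /\
    (* ev~ o (s x X) = ev *)
    (forall ks : frame_hom P3 P1,
      is_prod_hom p3E p3X p1E p1X s (id_hom X) ks ->
      forall a : S, ks (k (evG a)) = ev a).
Proof.
  destruct Hev as [HP1 Hev_u]. destruct HevG as [HP2 HevG_u].
  assert (Hg : exists g : X -> F, forall x, iX (g x) = x).
  { exists (fun x => proj1_sig (constructive_indefinite_description _ (HiX x))).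
    intro x. exact (proj2_sig (constructive_indefinite_description _ (HiX x))). }
  destruct Hg as [g Hg].
  pose proof (coprod_is_product E1 F) as HQ.
  destruct (proj1 HQ P1 p1E (comp_hom iX p1X)) as [m [Hm1 Hm2]].
  destruct (proj1 HP1 (coprod E1 X) (cpA E1 X) (cpB E1 X)) as [psi [Hpsi1 Hpsi2]].
  destruct (proj1 (coprod_is_product E1 X) P1 p1E p1X) as [phi [Hphi1 Hphi2]].
  assert (Hpp : forall z, phi (psi z) = z).
  { intro z. apply (proj2 HP1 P1 (comp_hom psi phi) (id_hom P1)); intros; cbn.
    - rewrite Hpsi1, Hphi1. reflexivity.
    - rewrite Hpsi2, Hphi2. reflexivity. }
  remember (psi (ev (sig tt))) as z eqn:Hz.
  pose (e := join (coprod E1 F) {p : E1 * X | proj1_sig z (fst p) (snd p)}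
          (fun p => meet (coprod E1 F) (cpA E1 F (fst (proj1_sig p))) (cpB E1 F (g (snd (proj1_sig p)))))).
  assert (He : m e = ev (sig tt)).
  { transitivity (phi z); [| rewrite Hz; apply Hpp].
    transitivity (join P1 {p : E1 * X | proj1_sig z (fst p) (snd p)}
       (fun p => meet P1 (p1E (fst (proj1_sig p))) (p1X (snd (proj1_sig p))))).
    - unfold e. rewrite hom_join. f_equal. extensionality p.
      rewrite hom_meet, Hm1, Hm2. cbn. rewrite Hg. reflexivity.
    - transitivity (phi (join (coprod E1 X) {p : E1 * X | proj1_sig z (fst p) (snd p)}
          (fun p => meet (coprod E1 X) (cpA E1 X (fst (proj1_sig p))) (cpB E1 X (snd (proj1_sig p)))))).
      + rewrite hom_join. f_equal. extensionality p. rewrite hom_meet, Hphi1, Hphi2. reflexivity.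
      + f_equal. symmetry. apply gen. }
  destruct (proj1 HS (coprod E1 F) (fun _ => e)) as [fh Hfh].
  destruct (proj1 (HevG_u E1 (coprod E1 F) (cpA E1 F) (cpB E1 F) HQ fh)) as [s Hs].
  assert (Claim2 : forall ks : frame_hom P3 P1,
      is_prod_hom p3E p3X p1E p1X s (id_hom X) ks ->
      forall a : S, ks (k (evG a)) = ev a).
  { intros ks [Hks1 Hks2] a.
    destruct (proj1 HP2 (coprod E1 F) (comp_hom s (cpA E1 F)) (cpB E1 F)) as [kk [Hkk1 Hkk2]].
    assert (Hkk : forall a, kk (evG a) = fh a).
    { apply Hs. split; intros; [rewrite Hkk1 | rewrite Hkk2]; reflexivity. }
    destruct Hk as [Hk1 Hk2].
    assert (H1 : ks (k (evG a)) = m (kk (evG a))).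
    { apply (proj2 HP2 P1 (comp_hom k ks) (comp_hom kk m)); intros; cbn.
      - rewrite Hk1, Hkk1. cbn. rewrite Hks1. exact (eq_sym (Hm1 _)).
      - rewrite Hk2, Hkk2. cbn. rewrite Hks2. exact (eq_sym (Hm2 _)). }
    rewrite H1, Hkk.
    apply (proj2 HS P1 (comp_hom fh m) ev). intros []. cbn. rewrite Hfh. exact He. }
  exists s. split; [| exact Claim2].
  intro a.
  apply (proj2 (Hev_u E1 P1 p1E p1X HP1 ev) (comp_hom q s) (id_hom E1)).
  - intros kk [Hkk1 Hkk2] b.
    destruct (proj1 HP1 P3 (comp_hom q p3E) p3X) as [kq [Hkq1 Hkq2]].
    destruct (proj1 HP3 P1 (comp_hom s p1E) p1X) as [ks [Hks1 Hks2]].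
    assert (Hkq : forall a, kq (ev a) = k (evG a)).
    { apply Hq. split; intros; [rewrite Hkq1 | rewrite Hkq2]; reflexivity. }
    assert (U : forall w, kk w = ks (kq w)).
    { apply (proj2 HP1 P1 kk (comp_hom kq ks)); intros; cbn.
      - rewrite Hkk1, Hkq1. cbn. rewrite Hks1. reflexivity.
      - rewrite Hkk2, Hkq2. cbn. rewrite Hks2. reflexivity. }
    rewrite U, Hkq. apply Claim2. split; intros; [rewrite Hks1 | rewrite Hks2]; reflexivity.
  - intros kk [Hkk1 Hkk2] b.
    apply (proj2 HP1 P1 kk (id_hom P1)); intros; cbn; [rewrite Hkk1 | rewrite Hkk2]; reflexivity.
Qed.
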